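(* Let $\sigma_0\ge\sigma_1\ge\dots\ge\sigma_{r-1}>0$ with $\sum_{i=0}^{r-1}\sigma_i^2=1$ and $r\le\min(N_1-1,N_2-1)$. Then $$\sigma_0\sigma_1\,\mathbb{I}_{N_1N_2}+\sum_{i=0}^{r-1}\sum_{j=0}^{r-1}\sigma_i\sigma_j\,|i\rangle\langle j|\otimes|i\rangle\langle j|\in\mathrm{SEP}_{N_1\otimes N_2}.$$
   Context: $\mathrm{SEP}_{N_1\otimes N_2}$ is the cone of separable matrices on $\mathbb{C}^{N_1}\otimes\mathbb{C}^{N_2}$, i.e. matrices of the form $\sum_i\lambda_i|x_i\rangle\langle x_i|\otimes|y_i\rangle\langle y_i|$ with $\lambda_i\ge0$. $\{|i\rangle\}$ is the computational basis. *)

(* Defs.v *)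
From HB Require Import structures.
From mathcomp Require Import all_boot all_order all_algebra.
From mathcomp Require Export mxtens.
Set Implicit Arguments.
Unset Strict Implicit.
Unset Printing Implicit Defensive.
Import Order.TTheory GRing.Theory Num.Theory.
Local Open Scope ring_scope.

Definition adjmx (C : numClosedFieldType) m n (A : 'M[C]_(m, n)) : 'M[C]_(n, m) :=
  map_mx Num.conj A^T.

Definition ketbra (C : numClosedFieldType) n (x : 'cV[C]_n) : 'M[C]_n :=
  x *m adjmx x.

(* SEP_{N1 (x) N2}: finite nonnegative combinations of |x><x| (x) |y><y|.
   The tensor (Kronecker) product is mathcomp's tensmx ( *t ), with
   index (i1, i2) |-> i1 * N2 + i2, i.e. |i1> (x) |i2>. *)
Definition SEP (C : numClosedFieldType) (N1 N2 : nat) (M : 'M[C]_(N1 * N2)) : Prop :=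
  exists (k : nat) (lam : 'I_k -> C) (x : 'I_k -> 'cV[C]_N1) (y : 'I_k -> 'cV[C]_N2),
    (forall t, 0 <= lam t) /\
    M = \sum_(t < k) lam t *: (ketbra (x t) *t ketbra (y t)).

(* The computational-basis operator |i><j| on C^N (zero if out of range). *)
Definition ketbra_ij (C : numClosedFieldType) (N i j : nat) : 'M[C]_N :=
  \matrix_(a < N, b < N) ((a == i :> nat) && (b == j :> nat))%:R.

(* Main.v *)
Require Import Defs.
From mathcomp Require Import all_boot all_order all_algebra.
From mathcomp Require Import mxtens.
From mathcomp Require Import ring zify.
Import Order.TTheory GRing.Theory Num.Theory.
Local Open Scope ring_scope.

Lemma SEP0 (C : numClosedFieldType) N1 N2 : @SEP C N1 N2 0.
Proof.
exists 0%N, (fun _ => 0), (fun _ => 0), (fun _ => 0); split; first by case.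
by rewrite big_ord0.
Qed.

Lemma SEP_add (C : numClosedFieldType) N1 N2 (A B : 'M[C]_(N1 * N2)) :
  SEP A -> SEP B -> SEP (A + B).
Proof.
move=> [k1 [l1 [x1 [y1 [h1 ->]]]]] [k2 [l2 [x2 [y2 [h2 ->]]]]].
exists (k1 + k2)%N,
  (fun t => match split t with inl t => l1 t | inr t => l2 t end),
  (fun t => match split t with inl t => x1 t | inr t => x2 t end),
  (fun t => match split t with inl t => y1 t | inr t => y2 t end).
split; first by move=> t; case: (split t).
rewrite big_split_ord /=; congr (_ + _); apply: eq_bigr => i _.
  by rewrite -[lshift _ _]/(unsplit (inl _ i)) unsplitK.
by rewrite -[rshift _ _]/(unsplit (inr _ i)) unsplitK.
Qed.

Lemma SEP_sum (C : numClosedFieldType) N1 N2 (I : finType) (F : I -> 'M[C]_(N1 * N2)) :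
  (forall i, SEP (F i)) -> SEP (\sum_i F i).
Proof.
move=> H; apply: (big_ind (@SEP C N1 N2)) => //; [exact: SEP0 | exact: SEP_add].
Qed.

Lemma SEP_term (C : numClosedFieldType) N1 N2 (c : C) x y :
  0 <= c -> @SEP C N1 N2 (c *: (ketbra x *t ketbra y)).
Proof.
move=> hc; exists 1%N, (fun _ => c), (fun _ => x), (fun _ => y); split => //.
by rewrite big_ord1.
Qed.

Lemma ketbraE (C : numClosedFieldType) n (x : 'cV[C]_n) a c :
  ketbra x a c = x a 0 * (x c 0)^*.
Proof. by rewrite /ketbra /adjmx !mxE big_ord1 !mxE. Qed.

Lemma tentE (C : numClosedFieldType) N1 N2 (lam : C) (x : 'cV[C]_N1) (y : 'cV[C]_N2) a b c d :
  (lam *: (ketbra x *t ketbra y)) (mxtens_index (a, b)) (mxtens_index (c, d))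
  = lam * ((x a 0 * (x c 0)^*) * (y b 0 * (y d 0)^*)).
Proof. by rewrite mxE tensmxE !ketbraE. Qed.

Lemma sum_delta (C : numClosedFieldType) n (i : 'I_n) (F : 'I_n -> C) :
  \sum_(j < n) (i == j)%:R * F j = F i.
Proof.
rewrite (bigD1 i) //= eqxx mul1r big1 ?addr0 // => j /negbTE.
by rewrite eq_sym => ->; rewrite mul0r.
Qed.

Lemma sum_delta_nat (C : numClosedFieldType) r (a : nat) (F : nat -> C) :
  \sum_(j < r) (a == j)%:R * F j = (a < r)%:R * F a.
Proof.
case: (ltnP a r) => h.
  by rewrite (@sum_delta C r (Ordinal h) (fun j : 'I_r => F j)) mul1r.
rewrite mul0r big1 // => j _; case: eqP => [e|]; last by rewrite mul0r.
by move: (ltn_ord j); rewrite -e ltnNge h.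
Qed.

Lemma i_ne1 (C : numClosedFieldType) : ('i : C) != 1.
Proof.
apply/eqP => h; have := @sqrCi C; rewrite h expr1n => /eqP.
rewrite -subr_eq0 opprK.
change ((1 + 1 : C) == 0) with ((2%:R : C) == 0).
by rewrite pnatr_eq0.
Qed.

Lemma i4 (C : numClosedFieldType) : ('i : C) ^+ 4 = 1.
Proof. by rewrite (exprM _ 2 2) sqrCi -signr_odd. Qed.

Lemma m1_ne1 (C : numClosedFieldType) : (-1 : C) != 1.
Proof.
apply/eqP => /eqP; rewrite -subr_eq0 -opprD oppr_eq0.
change ((1 + 1 : C) == 0) with ((2%:R : C) == 0).
by rewrite pnatr_eq0.
Qed.

Lemma sum_i (C : numClosedFieldType) (e : nat) :
  \sum_(u < 4) ('i : C) ^+ (u * e) = if (e %% 4 == 0)%N then 4 else 0.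
Proof.
have qE : ('i : C) ^+ e = 'i ^+ (e %% 4).
  by rewrite {1}(divn_eq e 4) exprD mulnC exprM i4 expr1n mul1r.
under eq_bigr => u _ do rewrite mulnC exprM.
set q := 'i ^+ e.
have q4 : q ^+ 4 = 1 by rewrite /q -exprM mulnC exprM i4 expr1n.
case: ifP => he.
  rewrite /q qE (eqP he) expr0.
  under eq_bigr => u _ do rewrite expr1n.
  by rewrite sumr_const card_ord.
have qn1 : q != 1.
  rewrite /q qE; have : (e %% 4 < 4)%N by rewrite ltn_pmod.
  move: he; case: (e %% 4)%N => [|[|[|[|]]]] //= _ _.
  - by rewrite expr1 i_ne1.
  - by rewrite sqrCi m1_ne1.
  - rewrite exprS sqrCi mulrN1; apply/eqP => /eqP.
    rewrite eqr_oppLR => /eqP h; have := @sqrCi C; rewrite h sqrrN expr1n.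
    by move/eqP; rewrite eq_sym (negbTE (m1_ne1 C)).
have : (1 - q) * \sum_(u < 4) q ^+ u = 0.
  rewrite !big_ord_recr big_ord0 /= add0r.
  transitivity (1 - q ^+ 4); last by rewrite q4 subrr.
  by rewrite !expr0 !exprS expr0 !mulr1; ring.
by move/eqP; rewrite mulf_eq0 subr_eq0 eq_sym (negbTE qn1) /= => /eqP.
Qed.

Definition zph (C : numClosedFieldType) r (th : {ffun 'I_r -> 'I_4}) (a : nat) : C :=
  \prod_(t < r) ('i ^+ th t) ^+ (a == t).

Lemma conj_zph (C : numClosedFieldType) r th a :
  (@zph C r th a)^* = \prod_(t < r) 'i ^+ (th t * (a == t) * 3).
Proof.
rewrite /zph rmorph_prod; apply: eq_bigr => t _.
rewrite !rmorphXn.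
change ((('i : C)^*) ^+ th t ^+ (a == t) = 'i ^+ (th t * (a == t) * 3)).
have e3 : (- 'i : C) = 'i ^+ 3 by rewrite exprS sqrCi mulrN1.
rewrite conjCi e3 -!exprM; congr (_ ^+ _); lia.
Qed.

Lemma prod_if (C : numClosedFieldType) r (P : 'I_r -> bool) :
  \prod_(t < r) (if P t then 4 else 0 : C) = if [forall t, P t] then 4 ^+ r else 0.
Proof.
case: ifP => [/forallP h|/negbT]; last first.
  rewrite negb_forall => /existsP [t ht].
  by rewrite (bigD1 t) //= (negbTE ht) mul0r.
by rewrite (eq_bigr (fun _ => 4)) ?prodr_const ?card_ord // => t _; rewrite h.
Qed.

Lemma mod4 (a b c d : bool) :
  (((a + d + (b + c) * 3) %% 4 == 0) = (a + d == b + c))%N.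
Proof. by case: a; case: b; case: c; case: d. Qed.

Lemma char_sum (C : numClosedFieldType) r (a b c d : nat) :
  \sum_(th : {ffun 'I_r -> 'I_4})
     (@zph C r th a * (@zph C r th b)^* * (@zph C r th c)^* * @zph C r th d)
  = if [forall t : 'I_r, ((a == t) + (d == t) == (b == t) + (c == t))%N]
    then 4 ^+ r else 0.
Proof.
rewrite -prod_if.
transitivity (\sum_(th : {ffun 'I_r -> 'I_4}) \prod_(t < r)
   ('i : C) ^+ (th t * ((a == t) + (d == t) + ((b == t) + (c == t)) * 3))).
  apply: eq_bigr => th _; rewrite !conj_zph /zph -!big_split /=.
  apply: eq_bigr => t _; rewrite -!exprM -!exprD; congr (_ ^+ _).
  by rewrite !mulnDr !mulnA; lia.
rewrite -(bigA_distr_bigA (fun (t : 'I_r) (u : 'I_4) => ('i : C) ^+ (u * ((a == t) + (d == t) + ((b == t) + (c == t)) * 3)))) /=.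
apply: eq_bigr => t _.
by rewrite sum_i mod4.
Qed.
Lemma cond_iff r (a b c d : nat) : (a < r)%N -> (b < r)%N -> (c < r)%N -> (d < r)%N ->
  [forall t : 'I_r, ((a == t) + (d == t) == (b == t) + (c == t))%N] =
  ((a == b) && (c == d)) || ((a == c) && (b == d)).
Proof.
move=> ha hb hc hd; apply/forallP/idP.
  move=> h; move: (h (Ordinal ha)) (h (Ordinal hd)) => /= /eqP h1 /eqP h2.
  apply/orP; lia.
case/orP => /andP [/eqP e1 /eqP e2] t; rewrite e1 e2 //.
by rewrite addnC.
Qed.

Ltac evb := repeat match goal with
  | |- context [(?x == ?y :> nat)] =>
     first [ have -> : (x == y :> nat) = true by apply/eqP; lia
           | have -> : (x == y :> nat) = false by apply/negbTE/eqP; lia ]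
  | |- context [(?x < ?y)%N] =>
     first [ have -> : (x < y)%N = true by lia
           | have -> : (x < y)%N = false by lia ]
  end.

Lemma final (C : numClosedFieldType) (sg : nat -> C) r (a b c d : nat)
  (Hz : forall i, (r <= i)%N -> sg i = 0) :
  sg 0%N * sg 1%N * ((a == c) && (b == d))%:R
    + (a < r)%:R * (sg a * (b == a)%:R * ((c < r)%:R * (sg c * (d == c)%:R)))
  = sqrtC (sg a) * sqrtC (sg b) * sqrtC (sg c) * sqrtC (sg d) *
      ([forall t : 'I_r, ((a == t) + (d == t) == (b == t) + (c == t))%N])%:R
    + (sg 0%N * sg 1%N - (a != b)%:R * (sg a * sg b)) * ((c == a) && (d == b))%:R.
Proof.
have sq : forall i, sg i = sqrtC (sg i) ^+ 2 by move=> i; rewrite sqrtCK.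
case: (ltnP a r) => ha.
  case: (ltnP b r) => hb.
    case: (ltnP c r) => hc.
      case: (ltnP d r) => hd.
        rewrite cond_iff //.
        have [?|?] := eqVneq a b; have [?|?] := eqVneq c d;
        have [?|?] := eqVneq a c; have [?|?] := eqVneq b d; subst; try (exfalso; lia); evb;
        rewrite /=;
        repeat match goal with |- context [sqrtC (sg ?x)] =>
          let s := fresh "s" in let h := fresh "h" in
          have h := sq x; set s := sqrtC (sg x) in h *; rewrite ?h; clearbody s end;
        ring.
      rewrite (Hz d hd) sqrtC0; evb; rewrite /=; case: (d =P b) => [e|ne]; [subst| ]; evb;
        rewrite ?(Hz _ hd) /= ?andbF /= ?(mulr0, mul0r, addr0); ring.
    rewrite (Hz c hc) sqrtC0; evb; rewrite /=; ring.
  rewrite (Hz b hb) sqrtC0; evb; rewrite /= [c == a]eq_sym [d == b]eq_sym; ring.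
rewrite (Hz a ha) sqrtC0; evb; rewrite /= [c == a]eq_sym [d == b]eq_sym; ring.
Qed.

Lemma mxtens_eq m n (a c : 'I_m) (b d : 'I_n) :
  (mxtens_index (a, b) == mxtens_index (c, d)) = (a == c) && (b == d).
Proof. by rewrite (inj_eq (can_inj (@mxtens_indexK m n))) xpair_eqE. Qed.

Lemma natr_and (C : numClosedFieldType) (p q : bool) :
  ((p && q)%:R : C) = p%:R * q%:R.
Proof. by case: p; case: q; rewrite ?mul1r ?mul0r. Qed.

Theorem lemma6 (C : numClosedFieldType) (N1 N2 r : nat) (sigma : nat -> C)
  (Hpos : forall i, (i < r)%N -> 0 < sigma i)
  (Hdec : forall i j, (i <= j)%N -> (j < r)%N -> sigma j <= sigma i)
  (Hzero : forall i, (r <= i)%N -> sigma i = 0)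
  (Hnorm : \sum_(i < r) sigma i ^+ 2 = 1)
  (Hr1 : (r <= N1.-1)%N) (Hr2 : (r <= N2.-1)%N) :
  @SEP C N1 N2
    ((sigma 0%N * sigma 1%N) *: (1%:M : 'M[C]_(N1 * N2))
     + \sum_(i < r) \sum_(j < r)
         (sigma i * sigma j) *: (ketbra_ij C N1 i j *t ketbra_ij C N2 i j)).
Proof.
have ge0 : forall i, 0 <= sigma i.
  by move=> i; case: (ltnP i r) => h; [exact: ltW (Hpos _ h) | rewrite Hzero].
have le0 : forall i, sigma i <= sigma 0%N.
  by move=> i; case: (ltnP i r) => h; [exact: Hdec | rewrite Hzero].
have le1 : forall i, (1 <= i)%N -> sigma i <= sigma 1%N.
  by move=> i h1; case: (ltnP i r) => h; [exact: Hdec | rewrite Hzero].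
pose x (th : {ffun 'I_r -> 'I_4}) : 'cV[C]_N1 := \col_(a < N1) (sqrtC (sigma a) * @zph C r th a).
pose y (th : {ffun 'I_r -> 'I_4}) : 'cV[C]_N2 := \col_(b < N2) (sqrtC (sigma b) * (@zph C r th b)^*).
pose dd (a b : nat) := sigma 0%N * sigma 1%N - (a != b)%:R * (sigma a * sigma b).
have dd_ge0 : forall a b, 0 <= dd a b.
  move=> a b; rewrite /dd; have [->|nab] := eqVneq a b.
    by rewrite /= mul0r subr0 mulr_ge0.
  rewrite /= mul1r subr_ge0; case: (ltngtP a b) => h.
  - by apply: ler_pM; [apply: ge0 | apply: ge0 | apply: le0 | apply: le1; lia].
  - by rewrite mulrC; apply: ler_pM; [apply: ge0 | apply: ge0 | apply: le0 | apply: le1; lia].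
  - by rewrite h eqxx in nab.
suff -> : (sigma 0%N * sigma 1%N) *: (1%:M : 'M[C]_(N1 * N2))
     + \sum_(i < r) \sum_(j < r)
         (sigma i * sigma j) *: (ketbra_ij C N1 i j *t ketbra_ij C N2 i j)
  = \sum_(th : {ffun 'I_r -> 'I_4}) (4 ^+ r)^-1 *: (ketbra (x th) *t ketbra (y th))
    + \sum_(a < N1) \sum_(b < N2)
        dd a b *: (ketbra (delta_mx a 0 : 'cV[C]_N1) *t ketbra (delta_mx b 0 : 'cV[C]_N2)).
  apply: SEP_add; apply: SEP_sum => ?.
    by apply: SEP_term; rewrite invr_ge0 exprn_ge0.
  by apply: SEP_sum => ?; apply: SEP_term.
apply/matrixP => p q; case: (mxtens_indexP p) => a b; case: (mxtens_indexP q) => c d.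
rewrite !mxE mxtens_eq !summxE.
have E2 : \sum_(i < r) (\sum_(j < r)
         (sigma i * sigma j) *: (ketbra_ij C N1 i j *t ketbra_ij C N2 i j))
    (mxtens_index (a, b)) (mxtens_index (c, d))
  = (a < r)%:R * (sigma a * (b == a :> nat)%:R * ((c < r)%:R * (sigma c * (d == c :> nat)%:R))).
  transitivity (\sum_(i < r) (a == i :> nat)%:R * ((sigma i * (b == i :> nat)%:R) *
     \sum_(j < r) (c == j :> nat)%:R * (sigma j * (d == j :> nat)%:R))).
    apply: eq_bigr => i _; rewrite summxE mulr_sumr mulr_sumr; apply: eq_bigr => j _.
    rewrite mxE tensmxE !mxE !natr_and; ring.
  under eq_bigr => i _ do rewrite (sum_delta_nat C r c (fun j : nat => sigma j * (d == j :> nat)%:R)).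
  rewrite (sum_delta_nat C r a (fun i : nat => sigma i * (b == i :> nat)%:R *
     ((c < r)%:R * (sigma c * (d == c :> nat)%:R)))).
  by [].
have E3 : \sum_th (4 ^- r *: (ketbra (x th) *t ketbra (y th)))
    (mxtens_index (a, b)) (mxtens_index (c, d))
  = sqrtC (sigma a) * sqrtC (sigma b) * sqrtC (sigma c) * sqrtC (sigma d) *
      ([forall t : 'I_r, ((a == t :> nat) + (d == t :> nat) == (b == t :> nat) + (c == t :> nat))%N])%:R.
  have cs : forall i, (sqrtC (sigma i))^* = sqrtC (sigma i).
    by move=> i; apply: geC0_conj; rewrite sqrtC_ge0.
  transitivity (4 ^- r * (sqrtC (sigma a) * sqrtC (sigma b) * sqrtC (sigma c) * sqrtC (sigma d) *
     \sum_(th : {ffun 'I_r -> 'I_4}) (@zph C r th a * (@zph C r th b)^* * (@zph C r th c)^* * @zph C r th d))).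
    rewrite mulr_sumr mulr_sumr; apply: eq_bigr => th _.
    rewrite tentE !mxE !rmorphM /= !cs conjCK; ring.
  rewrite char_sum; case: ifP => _ /=; last by rewrite !mulr0.
  have h4 : (4 : C) ^+ r != 0 by rewrite expf_neq0 // pnatr_eq0.
  by rewrite mulrCA mulVf // !mulr1.
have E4 : \sum_(a0 < N1) (\sum_(b0 < N2)
         dd a0 b0 *: (ketbra (delta_mx a0 0 : 'cV[C]_N1) *t ketbra (delta_mx b0 0 : 'cV[C]_N2)))
    (mxtens_index (a, b)) (mxtens_index (c, d))
  = dd a b * ((c == a) && (d == b))%:R.
  transitivity (\sum_(a0 < N1) (a == a0)%:R * ((c == a0)%:R *
     \sum_(b0 < N2) (b == b0)%:R * ((d == b0)%:R * dd a0 b0))).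
    apply: eq_bigr => a0 _; rewrite summxE mulr_sumr mulr_sumr; apply: eq_bigr => b0 _.
    rewrite tentE !mxE !eqxx !andbT !rmorph_nat; ring.
  under eq_bigr => a0 _ do rewrite (@sum_delta C N2 b (fun b0 => (d == b0)%:R * dd a0 b0)).
  rewrite (@sum_delta C N1 a (fun a0 => (c == a0)%:R * ((d == b)%:R * dd a0 b))).
  rewrite natr_and [c == a]eq_sym [d == b]eq_sym; ring.
rewrite E2 E3 E4 /dd; exact: final.
Qed.
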